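(* In the $T$-period model described in the context, with short sales prohibitions (admissible strategies are predictable self-financing with $h_m(t)\ge 0$ for $m\ge 1$), suppose there exists a strong risk neutral nonlinear expectation: a nonempty family $\mathcal{Q}$ of probability measures on $\Omega$ with $\sup_{Q\in\mathcal{Q}}Q(\omega)>0$ for all $\omega\in\Omega$ such that for every $Q\in\mathcal{Q}$, all $0\le t\le u\le T$ and all $m=1,\dots,M$, $E_Q[S_m^*(u)\mid\mathcal{F}_t]\le S_m^*(t)$ holds $Q$-almost surely (i.e. $\sup_{Q\in\mathcal{Q}}E_Q[S_m^*(u)\mid\mathcal{F}_t]\le S_m^*(t)$). Then there is no multi-period arbitrage under model uncertainty.
   Context: Multi-period model: $\Omega=\{\omega_1,\dots,\omega_K\}$ is finite with a filtration $\mathcal{F}_0\subseteq\cdots\subseteq\mathcal{F}_T$, $\mathcal{F}_0$ trivial and $\mathcal{F}_T=2^\Omega$. $\mathcal{P}$ is a nonempty family of probability measures on $\Omega$ with $\sup_{P\in\mathcal{P}}P(\omega)>0$ for all $\omega$. Bond: $S_0(0)=1$, $S_0(t)=(1+r_1)\cdots(1+r_t)$, each $r_t\ge 0$ $\mathcal{F}_{t-1}$-measurable. Risky securities $S_m(t)$ are $\mathcal{F}_t$-measurable with $S_m(0)>0$. Discounted prices $S_m^*(t)=S_m(t)/S_0(t)$, $\Delta S_m^*(t)=S_m^*(t)-S_m^*(t-1)$. A trading strategy $H=(h(t))_{t=1}^T$, $h(t)=(h_0(t),\dots,h_M(t))$ $\mathcal{F}_{t-1}$-measurable; $V^*(0)=h_0(1)+\sum_m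 h_m(1)S_m^*(0)$, $V^*(t)=h_0(t)+\sum_m h_m(t)S_m^*(t)$. $H$ is self-financing if $[h_0(t+1)-h_0(t)]+\sum_m[h_m(t+1)-h_m(t)]S_m^*(t)=0$ for $t=1,\dots,T-1$. An admissible self-financing $H$ is a multi-period arbitrage under model uncertainty if $V^*(0)=0$, $V^*(T)\ge 0$ on $\Omega$, and $\sup_{P\in\mathcal{P}}E_P[V^*(T)]>0$. *)

(* Defs.v *)
From HB Require Import structures.
From mathcomp Require Import all_boot all_order all_algebra.
Set Implicit Arguments. Unset Strict Implicit. Unset Printing Implicit Defensive.
Import Order.TTheory GRing.Theory Num.Theory.
Local Open Scope ring_scope.

Section Defs.
Variables (Omega : finType) (R : realFieldType).

Definition is_sigma_algebra (G : {set {set Omega}}) : Prop :=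
  [/\ setT \in G,
      (forall A, A \in G -> ~: A \in G) &
      (forall A B, A \in G -> B \in G -> A :|: B \in G)].

Definition measurable_wrt (G : {set {set Omega}}) (X : Omega -> R) : Prop :=
  forall x : R, [set w | X w == x] \in G.

Definition is_filtration (T : nat) (F : nat -> {set {set Omega}}) : Prop :=
  [/\ (forall t, (t <= T)%N -> is_sigma_algebra (F t)),
      (forall t u, (t <= u <= T)%N -> F t \subset F u),
      F 0%N = [set set0; setT] &
      F T = setT].

Definition is_prob (P : Omega -> R) : Prop :=
  (forall w, 0 <= P w) /\ \sum_w P w = 1.

Definition expect (P : Omega -> R) (X : Omega -> R) : R := \sum_w P w * X w.

Definition atom (G : {set {set Omega}}) (w : Omega) : {set Omega} :=
  \bigcap_(A in G | w \in A) A.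

(* Conditional expectation E_Q[X | G] on a finite space (version defined on
   atoms of positive Q-mass, which is Q-a.s. unique). *)
Definition condexp (Q : Omega -> R) (G : {set {set Omega}}) (X : Omega -> R)
  (w : Omega) : R :=
  (\sum_(v in atom G w) Q v * X v) / (\sum_(v in atom G w) Q v).

Definition bond (r : nat -> Omega -> R) (t : nat) (w : Omega) : R :=
  \prod_(1 <= s < t.+1) (1 + r s w).

Definition disc (M : nat) (r : nat -> Omega -> R) (S : 'I_M -> nat -> Omega -> R)
  (m : 'I_M) (t : nat) (w : Omega) : R := S m t w / bond r t w.

(* Discounted value V^*(t) of the strategy (h0, h); V^*(0) uses h(1). *)
Definition value (M : nat) (r : nat -> Omega -> R) (S : 'I_M -> nat -> Omega -> R)
  (h0 : nat -> Omega -> R) (h : 'I_M -> nat -> Omega -> R) (t : nat) (w : Omega) : R :=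
  if t == 0%N then h0 1%N w + \sum_m h m 1%N w * disc r S m 0 w
  else h0 t w + \sum_m h m t w * disc r S m t w.

Definition admissible (T M : nat) (F : nat -> {set {set Omega}})
  (r : nat -> Omega -> R) (S : 'I_M -> nat -> Omega -> R)
  (h0 : nat -> Omega -> R) (h : 'I_M -> nat -> Omega -> R) : Prop :=
  [/\ (forall t, (1 <= t <= T)%N -> measurable_wrt (F t.-1) (h0 t)),
      (forall m t, (1 <= t <= T)%N -> measurable_wrt (F t.-1) (h m t)),
      (forall t w, (1 <= t <= T.-1)%N ->
         (h0 t.+1 w - h0 t w) + \sum_m (h m t.+1 w - h m t w) * disc r S m t w = 0) &
      (forall m t w, (1 <= t <= T)%N -> 0 <= h m t w)].

Definition arbitrage (T M : nat) (F : nat -> {set {set Omega}})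
  (r : nat -> Omega -> R) (S : 'I_M -> nat -> Omega -> R)
  (Pfam : (Omega -> R) -> Prop)
  (h0 : nat -> Omega -> R) (h : 'I_M -> nat -> Omega -> R) : Prop :=
  [/\ admissible T F r S h0 h,
      (forall w, value r S h0 h 0 w = 0),
      (forall w, 0 <= value r S h0 h T w) &
      (* sup_{P in Pfam} E_P[V^*(T)] > 0 *)
      exists2 P, Pfam P & 0 < expect P (value r S h0 h T)].

End Defs.

(* Main.v *)
Require Import Defs.
From HB Require Import structures.
From mathcomp Require Import all_boot all_order all_algebra.
From mathcomp Require Import ring lra zify.
Import Order.TTheory GRing.Theory Num.Theory.
Set Implicit Arguments. Unset Strict Implicit.
Local Open Scope ring_scope.

Section Aux.
Variables (Omega : finType) (R : realFieldType).
Implicit Types (G : {set {set Omega}}) (Q : Omega -> R).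

Definition cclosed G := forall A, A \in G -> ~: A \in G.

Lemma atom_self G w : w \in atom G w.
Proof. by apply/bigcapP => A /andP[]. Qed.

Lemma atom_in G w v A : v \in atom G w -> A \in G -> w \in A -> v \in A.
Proof. by move/bigcapP => H AG wA; apply: H; rewrite AG wA. Qed.

Lemma meas_const G (X : Omega -> R) w v :
  measurable_wrt G X -> v \in atom G w -> X v = X w.
Proof.
move=> HX Hv; have := atom_in Hv (HX (X w)).
by rewrite !inE eqxx => /(_ isT) /eqP.
Qed.

Lemma atom_sym G w v : cclosed G -> v \in atom G w -> w \in atom G v.
Proof.
move=> HG Hv; apply/bigcapP => A /andP[AG vA]; apply/negPn/negP => wA.
have := atom_in Hv (HG _ AG).
by rewrite !inE wA vA => /(_ isT).
Qed.

Lemma atom_sub G w v : cclosed G -> v \in atom G w -> atom G v \subset atom G w.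
Proof.
move=> HG Hv; apply/subsetP => u Hu; apply/bigcapP => A /andP[AG wA].
exact: (atom_in Hu AG (atom_in Hv AG wA)).
Qed.

Lemma atom_eq G w v : cclosed G -> v \in atom G w -> atom G v = atom G w.
Proof.
move=> HG Hv; apply/eqP; rewrite eqEsubset atom_sub //=.
exact: atom_sub (atom_sym HG Hv).
Qed.

Lemma tower G Q (f : Omega -> R) : cclosed G -> (forall w, 0 <= Q w) ->
  \sum_w Q w * f w =
  \sum_w Q w * ((\sum_(v in atom G w) Q v * f v) / \sum_(v in atom G w) Q v).
Proof.
move=> HG HQ.
have step : forall w, Q w * ((\sum_(v in atom G w) Q v * f v) / \sum_(v in atom G w) Q v)
  = \sum_v (if v \in atom G w then Q w * (Q v * f v / \sum_(u in atom G v) Q u) else 0).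
  move=> w; rewrite -big_mkcond /= mulr_suml mulr_sumr; apply: eq_bigr => v Hv.
  by rewrite (atom_eq HG Hv).
rewrite (eq_bigr _ (fun w _ => step w)) exchange_big /=.
apply: eq_bigr => v _.
have -> : \sum_w (if v \in atom G w then Q w * (Q v * f v / \sum_(u in atom G v) Q u) else 0)
   = \sum_(w in atom G v) Q w * (Q v * f v / \sum_(u in atom G v) Q u).
  rewrite [RHS]big_mkcond; apply: eq_bigr => w _.
  have -> : (v \in atom G w) = (w \in atom G v) by apply/idP/idP; exact: atom_sym.
  by [].
rewrite -mulr_suml.
have QD : Q v <= \sum_(u in atom G v) Q u.
  by rewrite (bigD1 v) ?atom_self //= lerDl sumr_ge0.
case: (eqVneq (\sum_(u in atom G v) Q u) 0) => HD.
  have Q0 : Q v = 0 by apply/eqP; rewrite eq_le HQ andbT -HD.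
  by rewrite HD Q0 !mul0r.
by rewrite mulrCA mulfV // mulr1.
Qed.

Lemma superstep G Q (h X Y : Omega -> R) : cclosed G -> (forall w, 0 <= Q w) ->
  (forall w, 0 <= h w) ->
  (forall w v, v \in atom G w -> h v = h w) ->
  (forall w v, v \in atom G w -> Y v = Y w) ->
  (forall w, 0 < Q w -> condexp Q G X w <= Y w) ->
  \sum_w Q w * (h w * (X w - Y w)) <= 0.
Proof.
move=> HG HQ hpos hc Yc Hce.
rewrite (tower (fun w => h w * (X w - Y w)) HG HQ).
apply: sumr_le0 => w _.
have E : \sum_(v in atom G w) Q v * (h v * (X v - Y v)) =
   h w * (\sum_(v in atom G w) Q v * X v - Y w * \sum_(v in atom G w) Q v).
  transitivity (\sum_(v in atom G w) h w * (Q v * X v - Y w * Q v)).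
    by apply: eq_bigr => v Hv; rewrite (hc _ _ Hv) (Yc _ _ Hv); ring.
  by rewrite -mulr_sumr sumrB -mulr_sumr.
rewrite E.
have := HQ w; rewrite le_eqVlt => /orP[/eqP <-|Qp]; first by rewrite mul0r.
have QD : Q w <= \sum_(u in atom G w) Q u.
  by rewrite (bigD1 w) ?atom_self //= lerDl sumr_ge0.
have Dp : 0 < \sum_(u in atom G w) Q u by apply: lt_le_trans QD.
have := Hce w Qp; rewrite /condexp ler_pdivrMr // => HA.
apply: mulr_ge0_le0; first exact: ltW.
apply: mulr_le0_ge0; last by rewrite invr_ge0 ltW.
apply: mulr_ge0_le0 => //; by rewrite subr_le0.
Qed.

End Aux.

Theorem mainTheorem8 (Omega : finType) (R : realFieldType) (T M : nat)
  (F : nat -> {set {set Omega}})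
  (r : nat -> Omega -> R) (S : 'I_M -> nat -> Omega -> R)
  (Pfam Qfam : (Omega -> R) -> Prop) :
  (0 < T)%N ->
  is_filtration T F ->
  (* the family P of probability measures *)
  (exists P, Pfam P) ->
  (forall P, Pfam P -> is_prob P) ->
  (forall w, exists2 P, Pfam P & 0 < P w) ->
  (* interest rates: r_t >= 0 and F_{t-1}-measurable *)
  (forall t w, (1 <= t <= T)%N -> 0 <= r t w) ->
  (forall t, (1 <= t <= T)%N -> measurable_wrt (F t.-1) (r t)) ->
  (* risky securities: adapted, positive initial price *)
  (forall m t, (t <= T)%N -> measurable_wrt (F t) (S m t)) ->
  (forall m w, 0 < S m 0%N w) ->
  (* strong risk neutral nonlinear expectation Qfam *)
  (exists Q, Qfam Q) ->
  (forall Q, Qfam Q -> is_prob Q) ->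
  (forall w, exists2 Q, Qfam Q & 0 < Q w) ->
  (forall Q, Qfam Q -> forall (t u : nat) (m : 'I_M), (t <= u <= T)%N ->
     forall w, 0 < Q w ->
       condexp Q (F t) (disc r S m u) w <= disc r S m t w) ->
  (* conclusion: no multi-period arbitrage under model uncertainty *)
  forall (h0 : nat -> Omega -> R) (h : 'I_M -> nat -> Omega -> R),
    ~ arbitrage T F r S Pfam h0 h.
Proof.
move=> T0 [Fsig Fmono F0 FT] _ HP HPw r0 rmeas Smeas S0 _ HQ HQw Hce h0 h
  [[_ hmeas sf hpos] V0 VT [P PP Ppos]].
have key : forall Q, Qfam Q -> forall n, (n <= T)%N ->
    expect Q (value r S h0 h n) <= 0.
  move=> Q QQ; have [Qnn _] := HQ Q QQ.
  elim=> [|n IH] Hn.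
    by rewrite /expect big1 // => w _; rewrite V0 mulr0.
  have diff : forall w, value r S h0 h n.+1 w = value r S h0 h n w +
      \sum_m h m n.+1 w * (disc r S m n.+1 w - disc r S m n w).
    move=> w; rewrite (eq_bigr _ (fun m _ => mulrBr _ _ _)) sumrB.
    case: n IH Hn => [|k] IH Hn.
      rewrite /value /=; ring.
    have := sf k.+1 w; rewrite (eq_bigr _ (fun m _ => mulrBl _ _ _)) sumrB.
    have Hk : (1 <= k.+1 <= T.-1)%N by apply/andP; split => //; rewrite -ltnS prednK // ltnW.
    move=> /(_ Hk) SF.
    rewrite /value /=; lra.
  have Hn' : (n <= T)%N by apply: ltnW.
  have Gc : cclosed (F n) by have [_ ? _] := Fsig n Hn'.
  rewrite /expect.
  under eq_bigr => w _ do rewrite diff mulrDr mulr_sumr.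
  rewrite big_split exchange_big /=.
  have S2 : \sum_m \sum_w Q w * (h m n.+1 w * (disc r S m n.+1 w - disc r S m n w)) <= 0.
    apply: sumr_le0 => m _; apply: (@superstep _ _ (F n)) => //.
    - by move=> w; apply: hpos; rewrite Hn.
    - move=> w v Hv; apply: meas_const Hv; exact: (hmeas m n.+1 Hn).
    - move=> w v Hv; rewrite /disc (meas_const (Smeas m n Hn') Hv).
      congr (_ / _); rewrite /bond; apply: eq_big_nat => s /andP[s1 sn].
      congr (1 + _); apply: (meas_const _ Hv) => x.
      have sT : (1 <= s <= T)%N by lia.
      apply: (subsetP (Fmono s.-1 n _)); last exact: rmeas.
      by lia.
    - move=> w Qp; apply: Hce => //; rewrite leqnSn; exact: Hn.
  move: (IH Hn'); rewrite /expect => IH'; lra.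
have VT0 : forall w, value r S h0 h T w = 0.
  move=> w; have [Q QQ Qp] := HQw w.
  have [Qnn _] := HQ Q QQ.
  have := key Q QQ T (leqnn T); rewrite /expect (bigD1 w) //= => H.
  have : Q w * value r S h0 h T w <= 0.
    apply: le_trans H; rewrite lerDl; apply: sumr_ge0 => v _; exact: mulr_ge0.
  rewrite pmulr_rle0 // => H2; apply/eqP; rewrite eq_le H2 VT //.
move: Ppos; rewrite /expect big1 ?ltxx // => w _; by rewrite VT0 mulr0.
Qed.
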